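(* Let $\ell\ge 6$ and $w\ge 0$ be integers, let $A=\langle A_1,\dots,A_\ell\rangle$ and $B=\langle B_1,\dots,B_\ell\rangle$ be real sequences, and let $\delta:\mathbb{R}\times\mathbb{R}\to[0,\infty)$ be a symmetric pairwise cost function with $\delta(a,a)=0$ for all $a$. Suppose that for all reals $a,b,x,y$ with $a\le x\le y\le b$ or $a\ge x\ge y\ge b$ we have $\delta(a,b)\ge \delta(a,y)+\delta(b,x)-\delta(x,y)$. Define $$\mathrm{LB\_Webb}_w(A,B)=\mathrm{minlrpaths}(A,B)+\sum_{i=4}^{\ell-3}\kappa_i+\sum_{i=4}^{\ell-3}\gamma_i,$$ where $\kappa_i=\delta(A_i,\mathbb{U}^B_i)$ if $A_i>\mathbb{U}^B_i$, $\kappa_i=\delta(A_i,\mathbb{L}^B_i)$ if $A_i<\mathbb{L}^B_i$, and $\kappa_i=0$ otherwise; and $\gamma_i$ is given by the first applicable case among: (1) $\delta(B_i,\mathbb{U}^A_i)$ if $\mathrm{freeAbove}(i)$ and $B_i>\mathbb{U}^A_i$; (2) $\delta(B_i,\mathbb{L}^A_i)$ if $\mathrm{freeBelow}(i)$ and $B_i<\mathbb{L}^A_i$; (3) $\delta(B_i,\mathbb{U}^A_i)-\delta(\mathbb{U}^{\mathbb{L}^B}_i,\mathbb{U}^A_i)$ if not $\mathrm{freeAbove}(i)$ and $B_i>\mathbb{U}^{\mathbb{L}^B}_i>\mathbb{U}^A_i$; (4) $\delta(B_i,\mathbb{L}^A_i)-\delta(\mathbb{L}^{\mathbb{U}^B}_i,\mathbb{L}^A_i)$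 if not $\mathrm{freeBelow}(i)$ and $B_i<\mathbb{L}^{\mathbb{U}^B}_i<\mathbb{L}^A_i$; (5) $0$ otherwise. Then $\mathrm{LB\_Webb}_w(A,B)\le\mathrm{DTW}_w(A,B)$.
   Context: A warping path of $A$ and $B$ is a sequence of pairs $(i_1,j_1),\dots,(i_P,j_P)$ with $(i_1,j_1)=(1,1)$, $(i_P,j_P)=(\ell,\ell)$, and for each $1<k\le P$, $(i_{k-1},j_{k-1})\in\{(i_k-1,j_k),(i_k,j_k-1),(i_k-1,j_k-1)\}$. $\mathrm{DTW}_w(A,B)$ is the minimum of $\sum_{k=1}^P\delta(A_{i_k},B_{j_k})$ over all warping paths all of whose pairs satisfy $i_k-w\le j_k\le i_k+w$. For a real sequence $S$ of length $\ell$, its upper and lower envelopes with window $w$ are $\mathbb{U}^S_i=\max_{\max(1,i-w)\le j\le\min(\ell,i+w)}S_j$ and $\mathbb{L}^S_i=\min_{\max(1,i-w)\le j\le\min(\ell,i+w)}S_j$. $\mathbb{U}^{\mathbb{L}^B}$ is the upper envelope of the lower envelope of $B$, $\mathbb{L}^{\mathbb{U}^B}$ the lower envelope of the upper envelope of $B$, $\mathbb{L}^{\mathbb{U}^A}$ the lower envelope of the upper envelope of $A$, and $\mathbb{U}^{\mathbb{L}^A}$ the upper envelope of the lower envelope of $A$ (all with window $w$). $\mathrm{freeAbove}(j)$ holds iff for every $i$ with $4\le i\le\ell-3$ and $j-w\le i\le j+w$: $\mathbb{L}^B_i\le A_i\le\mathbb{U}^B_i$, or $A_i<\mathbb{L}^B_i\le\mathbb{L}^{\mathbb{U}^A}_i$.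 $\mathrm{freeBelow}(j)$ holds iff for every $i$ with $4\le i\le\ell-3$ and $j-w\le i\le j+w$: $\mathbb{L}^B_i\le A_i\le\mathbb{U}^B_i$, or $A_i>\mathbb{U}^B_i\ge\mathbb{U}^{\mathbb{L}^A}_i$. Writing $\delta_{i,j}=\delta(A_i,B_j)$, $\mathrm{minlrpaths}(A,B)=\delta_{1,1}+\delta_{\ell,\ell}+\min[\delta_{1,2}+\delta_{1,3},\ \delta_{1,2}+\delta_{2,3},\ \delta_{2,2}+\delta_{2,3},\ \delta_{2,2}+\delta_{3,3},\ \delta_{2,2}+\delta_{3,2},\ \delta_{2,1}+\delta_{3,2},\ \delta_{2,1}+\delta_{3,1}]+\min[\delta_{\ell,\ell-1}+\delta_{\ell,\ell-2},\ \delta_{\ell,\ell-1}+\delta_{\ell-1,\ell-2},\ \delta_{\ell-1,\ell-1}+\delta_{\ell-1,\ell-2},\ \delta_{\ell-1,\ell-1}+\delta_{\ell-2,\ell-2},\ \delta_{\ell-1,\ell-1}+\delta_{\ell-2,\ell-1},\ \delta_{\ell-1,\ell}+\delta_{\ell-2,\ell-1},\ \delta_{\ell-1,\ell}+\delta_{\ell-2,\ell}]$. *)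

(* Defs.v *)
(* concrete reals R, sequences as functions nat -> R, 1-based. *)
From Stdlib Require Import Reals Lra List Arith ClassicalEpsilon.
Import ListNotations.
Open Scope R_scope.

Definition pick (P : Prop) : {P} + {~ P} := excluded_middle_informative P.

Section Defs.
Variables (l w : nat).

Definition win_lo (i : nat) : nat := Nat.max 1 (i - w).
Definition win_hi (i : nat) : nat := Nat.min l (i + w).
Definition win (i : nat) : list nat :=
  seq (win_lo i) (S (win_hi i) - win_lo i).

Definition Uenv (S : nat -> R) (i : nat) : R :=
  fold_right Rmax (S (win_lo i)) (map S (win i)).
Definition Lenv (S : nat -> R) (i : nat) : R :=
  fold_right Rmin (S (win_lo i)) (map S (win i)).

Variables (delta : R -> R -> R) (A B : nat -> R).

Definition freeAbove (j : nat) : Prop :=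
  forall i, (4 <= i)%nat -> (i <= l - 3)%nat -> (j <= i + w)%nat -> (i <= j + w)%nat ->
    (Lenv B i <= A i <= Uenv B i) \/ (A i < Lenv B i /\ Lenv B i <= Lenv (Uenv A) i).

Definition freeBelow (j : nat) : Prop :=
  forall i, (4 <= i)%nat -> (i <= l - 3)%nat -> (j <= i + w)%nat -> (i <= j + w)%nat ->
    (Lenv B i <= A i <= Uenv B i) \/ (A i > Uenv B i /\ Uenv B i >= Uenv (Lenv A) i).

Definition d (i j : nat) : R := delta (A i) (B j).

Definition min_list (x : R) (xs : list R) : R := fold_right Rmin x xs.

Definition minlrpaths : R :=
  d 1 1 + d l l
  + min_list (d 1 2 + d 1 3)
      [d 1 2 + d 2 3; d 2 2 + d 2 3; d 2 2 + d 3 3; d 2 2 + d 3 2;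
       d 2 1 + d 3 2; d 2 1 + d 3 1]
  + min_list (d l (l-1) + d l (l-2))
      [d l (l-1) + d (l-1) (l-2); d (l-1) (l-1) + d (l-1) (l-2);
       d (l-1) (l-1) + d (l-2) (l-2); d (l-1) (l-1) + d (l-2) (l-1);
       d (l-1) l + d (l-2) (l-1); d (l-1) l + d (l-2) l].

Definition kappa (i : nat) : R :=
  if pick (A i > Uenv B i) then delta (A i) (Uenv B i)
  else if pick (A i < Lenv B i) then delta (A i) (Lenv B i)
  else 0.

Definition gamma (i : nat) : R :=
  if pick (freeAbove i /\ B i > Uenv A i) then delta (B i) (Uenv A i)
  else if pick (freeBelow i /\ B i < Lenv A i) then delta (B i) (Lenv A i)
  else if pick (~ freeAbove i /\ B i > Uenv (Lenv B) i /\ Uenv (Lenv B) i > Uenv A i)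
    then delta (B i) (Uenv A i) - delta (Uenv (Lenv B) i) (Uenv A i)
  else if pick (~ freeBelow i /\ B i < Lenv (Uenv B) i /\ Lenv (Uenv B) i < Lenv A i)
    then delta (B i) (Lenv A i) - delta (Lenv (Uenv B) i) (Lenv A i)
  else 0.

Definition sum_mid (f : nat -> R) : R :=
  fold_right Rplus 0 (map f (seq 4 (l - 6))).

Definition LB_Webb : R := minlrpaths + sum_mid kappa + sum_mid gamma.

Definition valid_step (p q : nat * nat) : Prop :=
  let (i', j') := p in let (i, j) := q in
  (i = S i' /\ j = j') \/ (i = i' /\ j = S j') \/ (i = S i' /\ j = S j').

Fixpoint steps_ok (p : nat * nat) (ps : list (nat * nat)) : Prop :=
  match ps with
  | [] => True
  | q :: qs => valid_step p q /\ steps_ok q qs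
  end.

Definition warping_path (P : list (nat * nat)) : Prop :=
  exists rest, P = (1%nat, 1%nat) :: rest /\
    last P (1%nat, 1%nat) = (l, l) /\ steps_ok (1%nat, 1%nat) rest.

Definition in_window (P : list (nat * nat)) : Prop :=
  Forall (fun p : nat * nat => let (i, j) := p in (j <= i + w)%nat /\ (i <= j + w)%nat) P.

Definition path_cost (P : list (nat * nat)) : R :=
  fold_right Rplus 0 (map (fun p : nat * nat => let (i, j) := p in d i j) P).

Definition is_DTW (D : R) : Prop :=
  (exists P, warping_path P /\ in_window P /\ path_cost P = D) /\
  (forall P, warping_path P -> in_window P -> D <= path_cost P).

End Defs.

(* Main.v *)
Require Import Defs.
From Stdlib Require Import Reals Lra Lia List Arith Bool.
Import ListNotations.
Open Scope R_scope.

Section Proof.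
Variables (l w : nat) (delta : R -> R -> R) (A B : nat -> R).
Hypothesis Hl : (6 <= l)%nat.
Hypothesis Hnn : forall a b, 0 <= delta a b.
Hypothesis Hsym : forall a b, delta a b = delta b a.
Hypothesis Hzero : forall a, delta a a = 0.
Hypothesis Htri : forall a b x y, (a <= x <= y /\ y <= b) \/ (a >= x /\ x >= y /\ y >= b) ->
           delta a b >= delta a y + delta b x - delta x y.

Ltac add_nn :=
  repeat match goal with
  | |- context [delta ?x ?y] =>
      lazymatch goal with _ : 0 <= delta x y |- _ => fail | _ => pose proof (Hnn x y) end
  | _ : context [delta ?x ?y] |- _ =>
      lazymatch goal with _ : 0 <= delta x y |- _ => fail | _ => pose proof (Hnn x y) end
  end.

Lemma mid_le a y b : (a <= y <= b \/ b <= y <= a) -> delta a y + delta b y <= delta a b.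
Proof.
  intros [H|H].
  - pose proof (Htri a b y y ltac:(left; lra)). rewrite Hzero in H0. lra.
  - pose proof (Htri a b y y ltac:(right; lra)). rewrite Hzero in H0. lra.
Qed.

Lemma fold_max_ge (xs : list R) x0 x : In x xs -> x <= fold_right Rmax x0 xs.
Proof.
  induction xs as [|y ys IH]; simpl; [tauto|].
  intros [<-|H]. apply Rmax_l. eapply Rle_trans; [apply IH; auto| apply Rmax_r].
Qed.

Lemma fold_min_le (xs : list R) x0 x : In x xs -> fold_right Rmin x0 xs <= x.
Proof.
  induction xs as [|y ys IH]; simpl; [tauto|].
  intros [<-|H]. apply Rmin_l. eapply Rle_trans; [apply Rmin_r| apply IH; auto].
Qed.

Lemma env_bounds (S : nat -> R) i j :
  (win_lo w i <= j <= win_hi l w i)%nat -> Lenv l w S i <= S j <= Uenv l w S i.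
Proof.
  intros Hj. assert (Hin : In (S j) (map S (win l w i))).
  { apply in_map. unfold win. apply in_seq. lia. }
  split; [apply fold_min_le | apply fold_max_ge]; auto.
Qed.

Definition cell_ok (i j : nat) : Prop :=
  (1 <= i <= l)%nat /\ (1 <= j <= l)%nat /\ (j <= i + w)%nat /\ (i <= j + w)%nat.

Lemma win_of i j : cell_ok i j -> (win_lo w i <= j <= win_hi l w i)%nat /\
                                  (win_lo w j <= i <= win_hi l w j)%nat.
Proof. unfold cell_ok, win_lo, win_hi. lia. Qed.

Definition Mf (f : nat -> R) (i : nat) : R :=
  if (andb (Nat.leb 4 i) (Nat.leb i (l - 3))) then f i else 0.
Definition Kf := Mf (kappa l w delta A B).
Definition Gf := Mf (gamma l w delta A B).

Lemma kappa_nonneg i : 0 <= kappa l w delta A B i.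
Proof.
  unfold kappa. destruct (pick _); [apply Hnn|]. destruct (pick _); [apply Hnn|lra].
Qed.

Lemma gamma_nonneg i : 0 <= gamma l w delta A B i.
Proof.
  unfold gamma.
  destruct (pick _); [apply Hnn|]. destruct (pick _); [apply Hnn|].
  destruct (pick _) as [[_ [H1 H2]]|].
  { pose proof (mid_le (B i) (Uenv l w (Lenv l w B) i) (Uenv l w A i) ltac:(lra)).
    rewrite (Hsym (Uenv l w A i)) in H. add_nn. lra. }
  destruct (pick _) as [[_ [H1 H2]]|]; [|lra].
  pose proof (mid_le (B i) (Lenv l w (Uenv l w B) i) (Lenv l w A i) ltac:(lra)).
  rewrite (Hsym (Lenv l w A i)) in H. add_nn. lra.
Qed.

Lemma kappa_le i j : cell_ok i j -> kappa l w delta A B i <= d delta A B i j.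
Proof.
  intros Hc. destruct (win_of i j Hc) as [W1 W2].
  pose proof (env_bounds B i j W1) as hB.
  unfold kappa, d.
  destruct (pick _).
  { pose proof (mid_le (A i) (Uenv l w B i) (B j) ltac:(lra)). add_nn. lra. }
  destruct (pick _).
  { pose proof (mid_le (A i) (Lenv l w B i) (B j) ltac:(lra)). add_nn. lra. }
  add_nn. lra.
Qed.

Lemma combo i j : cell_ok i j -> Kf i + gamma l w delta A B j <= d delta A B i j.
Proof.
  intros Hc. destruct (win_of i j Hc) as [W1 W2].
  pose proof (env_bounds B i j W1) as hB.
  pose proof (env_bounds A j i W2) as hA.
  pose proof (env_bounds (Uenv l w A) i j W1) as hUA.
  pose proof (env_bounds (Lenv l w A) i j W1) as hLA.
  pose proof (env_bounds (Lenv l w B) j i W2) as hLB.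
  pose proof (env_bounds (Uenv l w B) j i W2) as hUB.
  assert (HK : forall g, g <= d delta A B i j -> 0 <= g -> (forall x, kappa l w delta A B i = x -> x + g <= d delta A B i j) -> Kf i + g <= d delta A B i j).
  { intros g Hg Hg0 Hk. unfold Kf, Mf. destruct (andb (Nat.leb 4 i) (Nat.leb i (l - 3))) eqn:E.
    - apply Hk. reflexivity.
    - lra. }
  unfold gamma.
  destruct (pick _) as [[FA Hg]|NG1].
  {
    pose proof (mid_le (A i) (Uenv l w A j) (B j) ltac:(lra)) as M1.
    unfold Kf, Mf. destruct (andb (Nat.leb 4 i) (Nat.leb i (l - 3))) eqn:E.
    2: { unfold d. add_nn. lra. }
    apply andb_true_iff in E. destruct E as [E1 E2]. apply Nat.leb_le in E1, E2.
    unfold kappa, d. destruct (pick _). { lra. }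
    destruct (pick _) as [Hk|]. 2: { add_nn. lra. }
    destruct (FA i E1 E2 ltac:(unfold cell_ok in Hc; lia) ltac:(unfold cell_ok in Hc; lia)) as [X|[_ X]]; [lra|].
    pose proof (mid_le (A i) (Lenv l w B i) (Uenv l w A j) ltac:(lra)).
    add_nn. lra. }
  destruct (pick _) as [[FB Hg]|NG2].
  { pose proof (mid_le (A i) (Lenv l w A j) (B j) ltac:(lra)) as M1.
    unfold Kf, Mf. destruct (andb (Nat.leb 4 i) (Nat.leb i (l - 3))) eqn:E.
    2: { unfold d. add_nn. lra. }
    apply andb_true_iff in E. destruct E as [E1 E2]. apply Nat.leb_le in E1, E2.
    unfold kappa, d. destruct (pick _) as [Hk|].
    2: { destruct (pick _). { lra. } add_nn. lra. }
    destruct (FB i E1 E2 ltac:(unfold cell_ok in Hc; lia) ltac:(unfold cell_ok in Hc; lia)) as [X|[_ X]]; [lra|].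
    pose proof (mid_le (A i) (Uenv l w B i) (Lenv l w A j) ltac:(lra)).
    add_nn. lra. }
  destruct (pick _) as [[_ [H1 H2]]|NG3].
  { pose proof (mid_le (A i) (Uenv l w A j) (B j) ltac:(lra)) as M1.
    pose proof (Htri (A i) (B j) (Uenv l w A j) (Uenv l w (Lenv l w B) j) ltac:(left; lra)) as T.
    rewrite (Hsym (Uenv l w A j)) in T.
    unfold Kf, Mf. destruct (andb (Nat.leb 4 i) (Nat.leb i (l - 3))) eqn:E.
    2: { unfold d. add_nn. lra. }
    unfold kappa, d. destruct (pick _). { lra. }
    destruct (pick _) as [Hk|]. 2: { add_nn. lra. }
    pose proof (mid_le (A i) (Lenv l w B i) (Uenv l w (Lenv l w B) j) ltac:(lra)).
    add_nn. lra. }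
  destruct (pick _) as [[_ [H1 H2]]|NG4].
  { pose proof (mid_le (A i) (Lenv l w A j) (B j) ltac:(lra)) as M1.
    pose proof (Htri (A i) (B j) (Lenv l w A j) (Lenv l w (Uenv l w B) j) ltac:(right; lra)) as T.
    rewrite (Hsym (Lenv l w A j)) in T.
    unfold Kf, Mf. destruct (andb (Nat.leb 4 i) (Nat.leb i (l - 3))) eqn:E.
    2: { unfold d. add_nn. lra. }
    unfold kappa, d. destruct (pick _) as [Hk|].
    2: { destruct (pick _). { lra. } add_nn. lra. }
    pose proof (mid_le (A i) (Uenv l w B i) (Lenv l w (Uenv l w B) j) ltac:(lra)).
    add_nn. lra. }
  rewrite Rplus_0_r. unfold Kf, Mf. destruct (andb (Nat.leb 4 i) (Nat.leb i (l - 3))).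
  - apply kappa_le; auto.
  - unfold d; add_nn; lra.
Qed.


Notation dd := (d delta A B).

Lemma Mf_zero f i : (i <= 3 \/ l - 2 <= i)%nat -> Mf f i = 0.
Proof.
  intros H. unfold Mf. destruct (Nat.leb_spec 4 i), (Nat.leb_spec i (l - 3)); simpl;
  try reflexivity; lia.
Qed.

Lemma cell_facts i j : cell_ok i j ->
  0 <= Kf i /\ 0 <= Gf j /\ Kf i <= dd i j /\ Gf j <= dd i j /\ Kf i + Gf j <= dd i j.
Proof.
  intros Hc. pose proof (combo i j Hc) as C. pose proof (kappa_le i j Hc) as KL.
  assert (K0 : 0 <= Kf i) by (unfold Kf, Mf; destruct (andb _ _); [apply kappa_nonneg|lra]).
  assert (G0 : 0 <= Gf j) by (unfold Gf, Mf; destruct (andb _ _); [apply gamma_nonneg|lra]).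
  assert (GG : Gf j <= gamma l w delta A B j) by
    (unfold Gf, Mf; destruct (andb _ _); [lra|apply gamma_nonneg]).
  assert (KK : Kf i <= dd i j) by (unfold Kf, Mf; destruct (andb _ _); [auto|unfold d; add_nn; lra]).
  repeat split; lra.
Qed.

Definition m1 : R := min_list (dd 1 2 + dd 1 3)
      [dd 1 2 + dd 2 3; dd 2 2 + dd 2 3; dd 2 2 + dd 3 3; dd 2 2 + dd 3 2;
       dd 2 1 + dd 3 2; dd 2 1 + dd 3 1].
Definition m2 : R := min_list (dd l (l-1) + dd l (l-2))
      [dd l (l-1) + dd (l-1) (l-2); dd (l-1) (l-1) + dd (l-1) (l-2);
       dd (l-1) (l-1) + dd (l-2) (l-2); dd (l-1) (l-1) + dd (l-2) (l-1);
       dd (l-1) l + dd (l-2) (l-1); dd (l-1) l + dd (l-2) l].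

Lemma minlr_eq : minlrpaths l delta A B = dd 1 1 + dd l l + m1 + m2.
Proof. reflexivity. Qed.

Lemma min_list_le x xs y : In y (x :: xs) -> min_list x xs <= y.
Proof.
  unfold min_list. intros [<-|H].
  - induction xs as [|z zs IH]; simpl; [lra|]. eapply Rle_trans; [apply Rmin_r|exact IH].
  - apply fold_min_le; auto.
Qed.

Lemma m1_facts : m1 <= dd 1 2 + dd 1 3 /\ m1 <= dd 1 2 + dd 2 3 /\ m1 <= dd 2 2 + dd 2 3 /\
  m1 <= dd 2 2 + dd 3 3 /\ m1 <= dd 2 2 + dd 3 2 /\ m1 <= dd 2 1 + dd 3 2 /\ m1 <= dd 2 1 + dd 3 1.
Proof. unfold m1. repeat split; apply min_list_le; simpl; tauto. Qed.

Lemma m2_facts : m2 <= dd l (l-1) + dd l (l-2) /\ m2 <= dd l (l-1) + dd (l-1) (l-2) /\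
  m2 <= dd (l-1) (l-1) + dd (l-1) (l-2) /\ m2 <= dd (l-1) (l-1) + dd (l-2) (l-2) /\
  m2 <= dd (l-1) (l-1) + dd (l-2) (l-1) /\ m2 <= dd (l-1) l + dd (l-2) (l-1) /\
  m2 <= dd (l-1) l + dd (l-2) l.
Proof. unfold m2. repeat split; apply min_list_le; simpl; tauto. Qed.

Definition E : R := dd l l + m2.

Definition sp (i j : nat) : R :=
  if andb (Nat.eqb i 1) (Nat.eqb j 1) then dd 1 1
  else if andb (Nat.eqb i 1) (Nat.eqb j 2) then dd 1 1 + dd 1 2
  else if andb (Nat.eqb i 2) (Nat.eqb j 1) then dd 1 1 + dd 2 1
  else if andb (Nat.eqb i 2) (Nat.eqb j 2) then dd 1 1 + dd 2 2
  else dd 1 1 + m1.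

Definition sin (i j : nat) : R := if andb (Nat.leb i 3) (Nat.leb j 3) then dd i j else 0.

Definition cp (i j : nat) : R :=
  if andb (Nat.eqb i l) (Nat.eqb j l) then dd l l
  else if andb (Nat.eqb i l) (Nat.eqb j (l-1)) then dd l l + dd l (l-1)
  else if andb (Nat.eqb i (l-1)) (Nat.eqb j l) then dd l l + dd (l-1) l
  else if andb (Nat.eqb i (l-1)) (Nat.eqb j (l-1)) then dd l l + dd (l-1) (l-1)
  else E.

Definition ein (i j : nat) : R := if andb (Nat.leb (l-2) i) (Nat.leb (l-2) j) then dd i j else 0.

Ltac decide_nat :=
  repeat (match goal with
  | |- context [Nat.eqb ?a ?b] => destruct (Nat.eqb_spec a b); try (exfalso; lia)
  | |- context [Nat.leb ?a ?b] => destruct (Nat.leb_spec a b); try (exfalso; lia)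
  end; cbv beta iota delta [andb]).

Ltac add_dnn :=
  repeat match goal with
  | |- context [dd ?x ?y] =>
      lazymatch goal with _ : 0 <= dd x y |- _ => fail | _ => pose proof (Hnn (A x) (B y) : 0 <= dd x y) end
  end.

Ltac finish_R :=
  pose proof m1_facts; pose proof m2_facts; unfold E in *; add_dnn; lra.

Lemma sp_step i j i' j' : valid_step (i, j) (i', j') -> (1 <= i)%nat -> (1 <= j)%nat ->
  sp i' j' <= sp i j + sin i' j'.
Proof.
  intros Hs Hi Hj. unfold sp, sin.
  assert (Ci : i = 1%nat \/ i = 2%nat \/ (3 <= i)%nat) by lia.
  assert (Cj : j = 1%nat \/ j = 2%nat \/ (3 <= j)%nat) by lia.
  destruct Hs as [[-> ->]|[[-> ->]|[-> ->]]];
  destruct Ci as [->|[->|Ci]]; destruct Cj as [->|[->|Cj]]; decide_nat; finish_R.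
Qed.

Lemma cp_step i j i' j' : valid_step (i, j) (i', j') -> (i' <= l)%nat -> (j' <= l)%nat ->
  cp i j <= ein i j + cp i' j'.
Proof.
  intros Hs Hi Hj. unfold cp, ein.
  assert (Hb : (i <= l /\ j <= l)%nat) by (destruct Hs as [[? ?]|[[? ?]|[? ?]]]; lia).
  assert (Ci : i = l \/ i = (l-1)%nat \/ i = (l-2)%nat \/ (i <= l - 3)%nat) by lia.
  assert (Cj : j = l \/ j = (l-1)%nat \/ j = (l-2)%nat \/ (j <= l - 3)%nat) by lia.
  destruct Hs as [[-> ->]|[[-> ->]|[-> ->]]];
  destruct Ci as [->|[->|[->|Ci]]]; destruct Cj as [->|[->|[->|Cj]]]; decide_nat; finish_R.
Qed.

Fixpoint psum (f : nat -> R) (n : nat) : R :=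
  match n with O => 0 | S m => psum f m + f (S m) end.

Definition V (i j : nat) : R := sp i j + psum Kf i + psum Gf j + E - cp i j + ein i j.

Lemma V_step i j i' j' : valid_step (i, j) (i', j') -> (1 <= i)%nat -> (1 <= j)%nat ->
  cell_ok i' j' -> V i' j' <= V i j + dd i' j'.
Proof.
  intros Hs Hi Hj Hc.
  pose proof (sp_step i j i' j' Hs Hi Hj) as S1.
  pose proof (cp_step i j i' j' Hs ltac:(unfold cell_ok in Hc; lia) ltac:(unfold cell_ok in Hc; lia)) as C1.
  pose proof (cell_facts i' j' Hc) as [K0 [G0 [KL [GL KGL]]]].
  assert (Hq : sin i' j' + (psum Kf i' - psum Kf i) + (psum Gf j' - psum Gf j) + ein i' j' <= dd i' j').
  { assert (D : psum Kf i' - psum Kf i <= Kf i' /\ psum Gf j' - psum Gf j <= Gf j' /\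
       (psum Kf i' - psum Kf i + (psum Gf j' - psum Gf j) <= Kf i' + Gf j')).
    { destruct Hs as [[-> ->]|[[-> ->]|[-> ->]]]; simpl; repeat split; lra. }
    unfold sin, ein.
    destruct (Nat.leb_spec i' 3), (Nat.leb_spec j' 3); cbv beta iota delta [andb].
    - unfold Kf, Gf in *. rewrite (Mf_zero _ i'), (Mf_zero _ j') in * by lia.
      destruct (Nat.leb_spec (l-2) i'); [exfalso; lia|]. cbv beta iota. lra.
    - destruct (Nat.leb_spec (l-2) i'); [exfalso; lia|]. cbv beta iota. lra.
    - destruct (Nat.leb_spec (l-2) i'), (Nat.leb_spec (l-2) j'); cbv beta iota delta [andb]; try lra.
      exfalso; lia.
    - destruct (Nat.leb_spec (l-2) i'), (Nat.leb_spec (l-2) j'); cbv beta iota delta [andb]; try lra.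
      unfold Kf, Gf in *. rewrite (Mf_zero _ i'), (Mf_zero _ j') in * by lia. lra. }
  unfold V. lra.
Qed.

Lemma last_cons (p y : nat * nat) r : last (y :: r) p = last r y.
Proof.
  revert p y. induction r as [|z r IH]; intros p y; [reflexivity|].
  change (last (z :: r) p = last (z :: r) y). rewrite !IH. reflexivity.
Qed.

Lemma steps_lower p ps : steps_ok p ps -> forall q, In q (p :: ps) ->
  (fst p <= fst q /\ snd p <= snd q)%nat.
Proof.
  revert p. induction ps as [|y r IH]; intros p Hs q Hq.
  - destruct Hq as [<-|[]]; lia.
  - destruct Hs as [Hv Hs]. destruct Hq as [<-|Hq]; [lia|].
    specialize (IH y Hs q Hq). destruct p as [a b], y as [c e].
    destruct Hv as [[? ?]|[[? ?]|[? ?]]]; simpl in *; lia.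
Qed.

Lemma steps_upper p ps : steps_ok p ps -> forall q, In q (p :: ps) ->
  (fst q <= fst (last ps p) /\ snd q <= snd (last ps p))%nat.
Proof.
  revert p. induction ps as [|y r IH]; intros p Hs q Hq.
  - destruct Hq as [<-|[]]; simpl; lia.
  - destruct Hs as [Hv Hs]. rewrite last_cons.
    pose proof (IH y Hs y (or_introl eq_refl)) as Hy.
    destruct Hq as [<-|Hq]; [|apply IH; auto].
    destruct p as [a b], y as [c e].
    destruct Hv as [[? ?]|[[? ?]|[? ?]]]; simpl in *; lia.
Qed.

Lemma V_path ps p : steps_ok p ps -> (1 <= fst p)%nat -> (1 <= snd p)%nat ->
  (forall q, In q ps -> cell_ok (fst q) (snd q)) ->
  V (fst (last ps p)) (snd (last ps p)) <= V (fst p) (snd p) + path_cost delta A B ps.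
Proof.
  revert p. induction ps as [|y r IH]; intros p Hs H1 H2 Hc.
  - simpl. unfold path_cost. simpl. lra.
  - destruct Hs as [Hv Hs]. rewrite last_cons.
    pose proof (Hc y (or_introl eq_refl)) as Hcy.
    assert (IH' := IH y Hs ltac:(unfold cell_ok in Hcy; lia) ltac:(unfold cell_ok in Hcy; lia)
                    (fun q Hq => Hc q (or_intror Hq))).
    destruct p as [a b], y as [c e]. simpl in *.
    pose proof (V_step a b c e Hv H1 H2 Hcy).
    unfold path_cost in *. simpl. lra.
Qed.

Lemma fold_plus_shift (ys : list R) x : fold_right Rplus x ys = fold_right Rplus 0 ys + x.
Proof. induction ys; simpl; lra. Qed.

Lemma psum_mid f : psum (Mf f) l = sum_mid l f.
Proof.
  assert (H1 : forall m, (m <= l - 6)%nat ->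
     psum (Mf f) (S (S (S m))) = fold_right Rplus 0 (map f (seq 4 m))).
  { induction m as [|m IH]; intros Hm.
    - simpl. rewrite !(Mf_zero f) by lia. lra.
    - change (psum (Mf f) (S (S (S (S m))))) with (psum (Mf f) (S (S (S m))) + Mf f (S (S (S (S m))))).
      rewrite IH by lia. rewrite seq_S, map_app, fold_right_app. simpl.
      rewrite (fold_plus_shift _ (f _ + 0)). unfold Mf.
      destruct (Nat.leb_spec 4 (S (S (S (S m))))); [|exfalso; lia].
      destruct (Nat.leb_spec (S (S (S (S m)))) (l-3)); [|exfalso; lia]. simpl. lra. }
  assert (H2 : forall k, (k <= 3)%nat -> psum (Mf f) (l - 3 + k) = psum (Mf f) (l - 3)).
  { induction k as [|k IH]; intros Hk.
    - rewrite Nat.add_0_r. reflexivity.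
    - rewrite Nat.add_succ_r. simpl. rewrite IH by lia. rewrite (Mf_zero f) by lia. lra. }
  unfold sum_mid.
  replace l with (l - 3 + 3)%nat at 1 by lia. rewrite H2 by lia.
  replace (l - 3)%nat with (S (S (S (l - 6)))) by lia. apply H1. lia.
Qed.


Lemma main_sec (D : R) (HD : is_DTW l w delta A B D) : LB_Webb l w delta A B <= D.
Proof.
  destruct HD as [[P [[rest [HP [Hlast Hsteps]]] [Hwin Hcost]]] _].
  subst P.
  assert (Hend : last rest (1%nat, 1%nat) = (l, l)).
  { rewrite <- Hlast. symmetry. apply last_cons. }
  assert (Hc : forall q, In q rest -> cell_ok (fst q) (snd q)).
  { intros q Hq.
    pose proof (steps_lower _ _ Hsteps q (or_intror Hq)) as Lo.
    pose proof (steps_upper _ _ Hsteps q (or_intror Hq)) as Up.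
    rewrite Hend in Up. simpl in Lo, Up.
    unfold in_window in Hwin. rewrite Forall_forall in Hwin.
    specialize (Hwin q (or_intror Hq)). destruct q as [a b]. simpl in *.
    unfold cell_ok. lia. }
  pose proof (V_path rest (1%nat, 1%nat) Hsteps
     ltac:(simpl; lia) ltac:(simpl; lia) Hc) as HV.
  rewrite Hend in HV. simpl in HV.
  rewrite <- Hcost. unfold path_cost in *. simpl.
  unfold V in HV.
  unfold LB_Webb. rewrite minlr_eq.
  rewrite <- !psum_mid.
  fold Kf Gf in *.
  assert (E1 : psum Kf 1 = 0).
  { simpl. unfold Kf. rewrite Mf_zero by lia. lra. }
  assert (E2 : psum Gf 1 = 0).
  { simpl. unfold Gf. rewrite Mf_zero by lia. lra. }
  rewrite E1, E2 in HV.
  unfold sp, cp, ein in HV.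
  destruct (Nat.eqb_spec l 1); [lia|]. destruct (Nat.eqb_spec l 2); [lia|].
  destruct (Nat.eqb_spec l l); [|lia]. destruct (Nat.leb_spec (l-2) l); [|lia].
  destruct (Nat.eqb_spec 1 l); [lia|]. destruct (Nat.leb_spec (l-2) 1); [lia|].
  destruct (Nat.eqb_spec 1 (l-1)); [lia|].
  cbv beta iota delta [andb Nat.eqb] in HV. unfold E in HV. lra.
Qed.

End Proof.

Theorem theorem2 (l w : nat) (A B : nat -> R) (delta : R -> R -> R)
  (Hl : (6 <= l)%nat)
  (Hnn : forall a b, 0 <= delta a b)
  (Hsym : forall a b, delta a b = delta b a)
  (Hzero : forall a, delta a a = 0)
  (Htri : forall a b x y, (a <= x <= y /\ y <= b) \/ (a >= x /\ x >= y /\ y >= b) ->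
           delta a b >= delta a y + delta b x - delta x y)
  (D : R) (HD : is_DTW l w delta A B D) :
  LB_Webb l w delta A B <= D.
Proof. eapply main_sec; eauto. Qed.
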